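(* Let $\Theta\subseteq\mathbb{R}^p$ be open and $\rho_\theta=|\psi_\theta\rangle\langle\psi_\theta|$, $\theta=(\theta^1,\dots,\theta^p)\in\Theta$, a non-degenerate differentiable family of pure states on $\mathbb{C}^d$. If at some $\theta$ there exists a POVM $M$ with $F^M_\theta=H_\theta$ (i.e. $H_\theta$ is attainable), then $p\le d-1$.
   Context: Non-degenerate means that for each $\theta$ the matrices $\partial\rho_\theta/\partial\theta^1,\dots,\partial\rho_\theta/\partial\theta^p$ are linearly independent over $\mathbb{R}$. $H_\theta$ is the SLD quantum information matrix, $(H_\theta)_{jk}=\mathrm{Re}\,\mathrm{tr}\{\lambda^j\rho_\theta\lambda^k\}$ with $\lambda^j$ Hermitian solving $\frac{\partial\rho_\theta}{\partial\theta^j}=\frac12(\rho_\theta\lambda^j+\lambda^j\rho_\theta)$. A POVM is a finite family $M=\{M_m\}$ of positive semidefinite matrices summing to $\mathbb{I}$; with $p(m;\theta)=\mathrm{tr}\{\rho_\theta M_m\}$, its Fisher information matrix is $(F^M_\theta)_{jk}=\sum_{m:p(m;\theta)>0}\frac{1}{p(m;\theta)}\frac{\partial p(m;\theta)}{\partial\theta^j}\frac{\partial p(m;\theta)}{\partial\theta^k}$. *)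

(* Defs.v *)
From HB Require Import structures.
From mathcomp Require Import all_boot all_order all_algebra.
From mathcomp Require Import complex.
From mathcomp Require Import all_classical all_reals all_analysis.
Set Implicit Arguments. Unset Strict Implicit. Unset Printing Implicit Defensive.
Import Order.TTheory GRing.Theory Num.Theory.
Import numFieldNormedType.Exports.
Local Open Scope ring_scope.
Local Open Scope classical_set_scope.
Local Open Scope complex_scope.

Section QDefs.
Variable R : realType.
Local Notation C := R[i].

Definition adj (m n : nat) (A : 'M[C]_(m, n)) : 'M[C]_(n, m) :=
  (map_mx (@conjc R) A)^T.

Definition hermitian (d : nat) (A : 'M[C]_d) : Prop := adj A = A.

(* positive semidefinite: <v, A v> >= 0 (in the order of C, i.e. real & nonneg) *)
Definition psd (d : nat) (A : 'M[C]_d) : Prop :=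
  forall v : 'cV[C]_d, 0 <= (adj v *m A *m v) 0 0.

Definition POVM (d n : nat) (M : 'I_n -> 'M[C]_d) : Prop :=
  (forall m, psd (M m)) /\ \sum_(m < n) M m = 1%:M.

Definition edir (p : nat) (j : 'I_p) : 'rV[R]_p := delta_mx 0 j.

Definition mpartial (p m n : nat) (F : 'rV[R]_p -> 'M[C]_(m, n)) (j : 'I_p)
  (t : 'rV[R]_p) : 'M[C]_(m, n) :=
  \matrix_(a, b)
    ((('D_(edir j) (fun s : 'rV[R]_p => complex.Re (F s a b)) t)%:C : C) +
     'i * (('D_(edir j) (fun s : 'rV[R]_p => complex.Im (F s a b)) t)%:C)).

Definition cdifferentiable_at (p d : nat) (psi : 'rV[R]_p -> 'cV[C]_d)
  (t : 'rV[R]_p) : Prop :=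
  forall a : 'I_d, differentiable (fun s : 'rV[R]_p => complex.Re (psi s a 0)) t /\
                   differentiable (fun s : 'rV[R]_p => complex.Im (psi s a 0)) t.

Definition proj_state (p d : nat) (psi : 'rV[R]_p -> 'cV[C]_d) (t : 'rV[R]_p)
  : 'M[C]_d := psi t *m adj (psi t).

Definition R_lin_indep (p d : nat) (D : 'I_p -> 'M[C]_d) : Prop :=
  forall c : 'I_p -> R, \sum_(j < p) ((c j)%:C : C) *: D j = 0 ->
    forall j, c j = 0.

Definition is_SLD (p d : nat) (rho : 'rV[R]_p -> 'M[C]_d) (t : 'rV[R]_p)
  (j : 'I_p) (L : 'M[C]_d) : Prop :=
  hermitian L /\
  mpartial rho j t = (2%:R)^-1 *: (rho t *m L + L *m rho t).

Definition SLD_info (p d : nat) (rho : 'M[C]_d) (L : 'I_p -> 'M[C]_d)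
  : 'M[R]_p :=
  \matrix_(j, k) complex.Re (\tr (L j *m rho *m L k)).

(* outcome probability p(m; t) = tr(rho_t M_m) (real for a state and a POVM) *)
Definition outcome_prob (p d n : nat) (rho : 'rV[R]_p -> 'M[C]_d)
  (M : 'I_n -> 'M[C]_d) (m : 'I_n) (t : 'rV[R]_p) : R :=
  complex.Re (\tr (rho t *m M m)).

Definition fisher_info (p d n : nat) (rho : 'rV[R]_p -> 'M[C]_d)
  (M : 'I_n -> 'M[C]_d) (t : 'rV[R]_p) : 'M[R]_p :=
  \matrix_(j, k)
    \sum_(m < n | 0 < outcome_prob rho M m t)
      (outcome_prob rho M m t)^-1 *
      'D_(edir j) (outcome_prob rho M m) t *
      'D_(edir k) (outcome_prob rho M m) t.

End QDefs.

(* Main.v *)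
Set Warnings "-all".
Require Import Defs.
From HB Require Import structures.
From mathcomp Require Import all_boot all_order all_algebra.
From mathcomp Require Import complex.
From mathcomp Require Import all_classical all_reals all_analysis.
From mathcomp Require Import lra ring.
Import Order.TTheory GRing.Theory Num.Theory.
Import numFieldNormedType.Exports.
Local Open Scope ring_scope.
Local Open Scope classical_set_scope.
Set Implicit Arguments. Unset Strict Implicit. Unset Printing Implicit Defensive.
Local Open Scope complex_scope.
Local Notation Re := complex.Re.
Local Notation Im := complex.Im.
Lemma adjE (R : realType) m n (A : 'M[R[i]]_(m,n)) i j : adj A i j = (A j i)^*.
Proof. by rewrite !mxE. Qed.
Lemma adjD (R : realType) m n (A B : 'M[R[i]]_(m,n)) : adj (A + B) = adj A + adj B.
Proof. by apply/matrixP => i j; rewrite !mxE rmorphD. Qed.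
Lemma adjN (R : realType) m n (A : 'M[R[i]]_(m,n)) : adj (- A) = - adj A.
Proof. by apply/matrixP => i j; rewrite !mxE rmorphN. Qed.
Lemma adjZ (R : realType) m n (c : R[i]) (A : 'M[R[i]]_(m,n)) : adj (c *: A) = c^* *: adj A.
Proof. by apply/matrixP => i j; rewrite !mxE rmorphM. Qed.
Lemma adjM (R : realType) m n k (A : 'M[R[i]]_(m,n)) (B : 'M[R[i]]_(n,k)) :
  adj (A *m B) = adj B *m adj A.
Proof. by rewrite /adj map_mxM trmx_mul. Qed.
Lemma adjK (R : realType) m n (A : 'M[R[i]]_(m,n)) : adj (adj A) = A.
Proof. by apply/matrixP => i j; rewrite !mxE conjcK. Qed.
Lemma adj_sum (R : realType) m n k (F : 'I_k -> 'M[R[i]]_(m,n)) :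
  adj (\sum_(l < k) F l) = \sum_(l < k) adj (F l).
Proof. apply/matrixP => i j; rewrite [LHS]mxE [LHS]mxE summxE rmorph_sum summxE; apply: eq_bigr => l _; by rewrite !mxE. Qed.
Lemma adj0 (R : realType) m n : adj (0 : 'M[R[i]]_(m,n)) = 0.
Proof. by apply/matrixP => i j; rewrite !mxE rmorph0. Qed.
Lemma adj1 (R : realType) n : adj (1%:M : 'M[R[i]]_n) = 1%:M.
Proof. by apply/matrixP => i j; rewrite !mxE rmorph_nat eq_sym. Qed.
Lemma sym_aux (R : realType) (a b x y : R[i]) : 0 <= a -> 0 <= b -> 0 <= a + x + y + b ->
  0 <= a + 'i * x - 'i * y + b -> x = y^*.
Proof.
case: a => a1 a2; case: b => b1 b2; case: x => x1 x2; case: y => y1 y2.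
rewrite !lecE /=. simpc. 
move=> /andP[/eqP h1 _] /andP[/eqP h2 _] /andP[/eqP h3 _] /andP[/eqP h4 _].
apply/eqP; rewrite eq_complex /=; apply/andP; split; apply/eqP; lra.
Qed.
Definition form (R : realType) d (A : 'M[R[i]]_d) (u w : 'cV[R[i]]_d) : R[i] :=
  (adj u *m A *m w) 0 0.
Lemma formDl (R : realType) d (A : 'M[R[i]]_d) u v w : form A (u + v) w = form A u w + form A v w.
Proof. by rewrite /form adjD !mulmxDl mxE. Qed.
Lemma formDr (R : realType) d (A : 'M[R[i]]_d) u v w : form A w (u + v) = form A w u + form A w v.
Proof. by rewrite /form !mulmxDr mxE. Qed.
Lemma formZl (R : realType) d (A : 'M[R[i]]_d) c u w : form A (c *: u) w = c^* * form A u w.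
Proof. by rewrite /form adjZ -!scalemxAl mxE. Qed.
Lemma formZr (R : realType) d (A : 'M[R[i]]_d) c u w : form A u (c *: w) = c * form A u w.
Proof. by rewrite /form -!scalemxAr mxE. Qed.
Lemma formNl (R : realType) d (A : 'M[R[i]]_d) u w : form A (- u) w = - form A u w.
Proof. by rewrite -scaleN1r formZl rmorphN1 mulN1r. Qed.
Lemma formNr (R : realType) d (A : 'M[R[i]]_d) u w : form A u (- w) = - form A u w.
Proof. by rewrite -scaleN1r formZr mulN1r. Qed.
Lemma form_sumA (R : realType) d n (A : 'I_n -> 'M[R[i]]_d) u w :
  form (\sum_(m < n) A m) u w = \sum_(m < n) form (A m) u w.
Proof. by rewrite /form mulmx_sumr mulmx_suml summxE. Qed.
Lemma form_sumr (R : realType) d n (A : 'M[R[i]]_d) u (w : 'I_n -> 'cV[R[i]]_d) :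
  form A u (\sum_(m < n) w m) = \sum_(m < n) form A u (w m).
Proof. by rewrite /form mulmx_sumr summxE. Qed.
Lemma form_suml (R : realType) d n (A : 'M[R[i]]_d) w (u : 'I_n -> 'cV[R[i]]_d) :
  form A (\sum_(m < n) u m) w = \sum_(m < n) form A (u m) w.
Proof. by rewrite /form adj_sum !mulmx_suml summxE. Qed.
Lemma form_conj (R : realType) d (A : 'M[R[i]]_d) u w : (form A u w)^* = form (adj A) w u.
Proof. by rewrite /form -adjE !adjM adjK mulmxA. Qed.
Lemma form0r (R : realType) d (A : 'M[R[i]]_d) u : form A u 0 = 0.
Proof. by rewrite /form mulmx0 mxE. Qed.

Lemma le_of_eq_ring (R : numDomainType) (x y : R) : x = y -> x <= y.
Proof. by move=> ->. Qed.
Lemma psd_sym (R : realType) d (A : 'M[R[i]]_d) : psd A -> forall u w, form A u w = (form A w u)^*.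
Proof.
move=> hA u w; apply: (@sym_aux R (form A u u) (form A w w)); try exact: hA.
  have := hA (u + w); rewrite -/(form A _ _) !formDl !formDr.
  by move=> h; apply: le_trans h _; apply: le_of_eq_ring; ring.
have := hA (u + 'i *: w); rewrite -/(form A _ _) !formDl !formDr !formZl !formZr.
move=> h; apply: le_trans h _; apply: le_of_eq_ring.
move: (form A u u) (form A u w) (form A w u) (form A w w) => [a1 a2] [b1 b2] [c1 c2] [e1 e2].
apply/eqP; rewrite eq_complex; simpc; rewrite /=; apply/andP; split; apply/eqP; ring.
Qed.
Lemma real_aux (R : realType) (r c : R) : 0 <= c -> (forall s : R, 0 <= s * r + s ^+ 2 * c) -> r = 0.
Proof.
move=> hc h; have := h (- r / (c + 1)).
have hc1 : c + 1 != 0 by rewrite gt_eqF // ltr_wpDl.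
have E : (- r / (c + 1)) * r + (- r / (c + 1)) ^+ 2 * c = - (r ^+ 2) / (c + 1) ^+ 2.
  by field.
rewrite E => h2.
have : 0 <= - r ^+ 2.
  have hp : 0 < (c + 1) ^+ 2 by rewrite exprn_gt0 // ltr_wpDl.
  by move: h2; rewrite pmulr_lge0 // invr_gt0.
by move=> h3; apply/eqP; rewrite -sqrf_eq0 eq_le sqr_ge0 andbT -oppr_ge0.
Qed.

Lemma psd_null (R : realType) d (A : 'M[R[i]]_d) w : psd A -> form A w w = 0 -> forall u, form A u w = 0.
Proof.
move=> hA hw u.
have key : forall k : R[i], 0 <= k * (form A u w)^* + k^* * form A u w + k^* * k * form A u u.
  move=> k; have := hA (w + k *: u); rewrite -/(form A _ _) !formDl !formDr !formZl !formZr hw (psd_sym hA w u).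
  by move=> h; apply: le_trans h _; apply: le_of_eq_ring; ring.
have cge := hA u; rewrite -/(form A _ _) in cge.
move: key cge; case: (form A u w) => z1 z2; case: (form A u u) => c1 c2 key.
rewrite lecE /= => /andP[/eqP c20 c1ge].
rewrite c20 in key.
have k1 : forall s : R, 0 <= s * (z1 + z1) + s ^+ 2 * c1.
  move=> s; have := key s%:C; rewrite lecE; simpc; rewrite /= => /andP[_ h].
  by apply: le_trans h _; apply: le_of_eq_ring; ring.
have k2 : forall s : R, 0 <= s * (z2 + z2) + s ^+ 2 * c1.
  move=> s; have := key (Complex 0 s); rewrite lecE; simpc; rewrite /= => h.
  by apply: le_trans h _; apply: le_of_eq_ring; ring.
have := real_aux c1ge k1; have := real_aux c1ge k2.
move=> e2 e1; have -> : z1 = 0 by lra.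
by have -> : z2 = 0 by lra.
Qed.
Lemma ww_aux (R : realType) (a1 a2 p q : R) : p != 0 ->
  (q%:C - (Complex a1 a2 / p%:C) * (Complex a1 a2)^* - (Complex a1 a2 / p%:C)^* * Complex a1 a2
    + (Complex a1 a2 / p%:C)^* * (Complex a1 a2 / p%:C) * p%:C : R[i])
  = (q - (a1 ^+ 2 + a2 ^+ 2) / p)%:C.
Proof.
move=> hp. simpc. rewrite /=.
rewrite expr0n /= addr0; congr Complex; field; rewrite ?expf_neq0 //.
Qed.
Lemma psd_real (R : realType) d (A : 'M[R[i]]_d) u : psd A ->
  form A u u = (Re (form A u u))%:C /\ 0 <= Re (form A u u).
Proof.
move=> hA; have := hA u; rewrite -/(form A u u); case: (form A u u) => x y.
by rewrite lecE /= => /andP[/eqP -> ->].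
Qed.

Lemma term_main (R : realType) d (M : 'M[R[i]]_d) ps ch : psd M ->
  0 < Re (form M ps ps) ->
  (Re (form M ps ps))^-1 * Re (form M ps ch) * Re (form M ps ch) <= Re (form M ch ch)
  /\ ((Re (form M ps ps))^-1 * Re (form M ps ch) * Re (form M ps ch) = Re (form M ch ch) ->
      Im (form M ps ch) = 0 /\
      forall u, form M u ch = (form M ps ch / form M ps ps) * form M u ps).
Proof.
move=> hM hp.
set l := form M ps ch / form M ps ps.
have Eww : form M (ch - l *: ps) (ch - l *: ps) =
   form M ch ch - l * (form M ps ch)^* - l^* * form M ps ch + l^* * l * form M ps ps.
  rewrite !formDl !formDr !formNl !formNr !formZl !formZr (psd_sym hM ch ps).
  ring.
have key : form M (ch - l *: ps) (ch - l *: ps) = 0 -> forall u, form M u ch = l * form M u ps.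
  move=> h u; have := psd_null hM h u; rewrite formDr formNr formZr.
  by move/eqP; rewrite subr_eq0 => /eqP.
have [Pe _] := psd_real ps hM; have [Qe _] := psd_real ch hM.
have [_ wge] := psd_real (ch - l *: ps) hM.
move: Pe Qe hp Eww wge key; rewrite /l.
set p := Re (form M ps ps); set q := Re (form M ch ch).
set a1 := Re (form M ps ch); set a2 := Im (form M ps ch).
have Ea : form M ps ch = Complex a1 a2 by rewrite /a1 /a2; case: (form M ps ch).
move=> Pe Qe hp Eww; rewrite Eww Pe Qe Ea ww_aux ?gt_eqF // /= => hq key.
rewrite subr_ge0 in hq.
have hp' : 0 < p^-1 by rewrite invr_gt0.
have h2 : 0 <= a2 ^+ 2 / p by rewrite divr_ge0 ?sqr_ge0 ?ltW.
have e1 : p^-1 * a1 * a1 = a1 ^+ 2 / p by ring.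
rewrite e1; split.
  apply: le_trans hq; rewrite mulrDl lerDl //.
move=> hq2.
have a20 : a2 = 0.
  have : a2 ^+ 2 / p <= 0 by move: hq; rewrite -hq2 mulrDl => ?; lra.
  move=> h3; have : a2 ^+ 2 / p = 0 by apply/eqP; rewrite eq_le h3 h2.
  move/eqP; rewrite mulf_eq0 invr_eq0 (gt_eqF hp) orbF sqrf_eq0 => /eqP //.
split => //; apply: key.
by rewrite -hq2 a20 expr0n /= addr0 subrr.
Qed.
Lemma psd1 (R : realType) d : psd (1%:M : 'M[R[i]]_d).
Proof.
move=> v; rewrite mulmx1 mxE; apply: sumr_ge0 => a _.
by rewrite !mxE mulrC mulcJ_ge0.
Qed.

Lemma form_delta (R : realType) d (u : 'cV[R[i]]_d) a : form 1%:M (delta_mx a 0) u = u a 0.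
Proof.
rewrite /form mulmx1 mxE (bigD1 a) //= big1 => [|b hb].
  by rewrite !mxE !eqxx /= oppr0 mul1r addr0.
by rewrite !mxE (negbTE hb) /= oppr0 mul0r.
Qed.

Lemma form_null1 (R : realType) d (u : 'cV[R[i]]_d) : form 1%:M u u = 0 -> u = 0.
Proof.
move=> h; apply/matrixP => a b; rewrite ord1 mxE -form_delta.
exact: (psd_null (@psd1 R d) h).
Qed.

Lemma lin_indep_bound (R : realType) d p (ps : 'cV[R[i]]_d) (ch : 'I_p -> 'cV[R[i]]_d) :
  form 1%:M ps ps = 1 ->
  (forall j, form 1%:M ps (ch j) = 0) ->
  (forall j k, Im (form 1%:M (ch k) (ch j)) = 0) ->
  (forall c : 'I_p -> R, \sum_(j < p) (c j)%:C *: ch j = 0 -> forall j, c j = 0) ->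
  (p.+1 <= d)%N.
Proof.
move=> hps hort hre hind.
pose A : 'M[R[i]]_(1 + p, d) := col_mx (ps^T) (\matrix_(j < p, a < d) ch j a 0).
suff hf : row_free A by rewrite -[p.+1]/(1 + p)%N (leq_trans _ (rank_leq_col A)) // row_leq_rank.
apply/inj_row_free => v hv.
set al := v 0 (lshift p 0); set be := fun j => v 0 (rshift 1 j).
have hz : al *: ps + \sum_(j < p) be j *: ch j = 0.
  apply/matrixP => a b; rewrite ord1 !mxE summxE.
  have := congr1 (fun M : 'M[R[i]]_(1,d) => M 0 a) hv; rewrite !mxE big_split_ord /= big_ord1 col_mxEu !mxE.
  move=> e; apply: etrans e; congr (_ + _); apply: eq_bigr => j _; by rewrite [LHS]mxE /A col_mxEd mxE.
have al0 : al = 0.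
  have := congr1 (form 1%:M ps) hz; rewrite form0r formDr formZr hps mulr1 form_sumr.
  by rewrite big1 ?addr0 // => j _; rewrite formZr hort mulr0.
move: hz; rewrite al0 scale0r add0r => hz.
pose x := fun j => Re (be j); pose y := fun j => Im (be j).
set u := \sum_(j < p) (x j)%:C *: ch j; set w := \sum_(j < p) (y j)%:C *: ch j.
have huw : u + 'i *: w = 0.
  rewrite -hz /u /w scaler_sumr -big_split /=; apply: eq_bigr => j _.
  by rewrite scalerA -scalerDl /x /y -complexE.
have rr : forall (c e : 'I_p -> R), Im (form 1%:M (\sum_(j < p) (c j)%:C *: ch j) (\sum_(j < p) (e j)%:C *: ch j)) = 0.
  move=> c e; rewrite form_suml raddf_sum big1 // => k _.
  rewrite formZl form_sumr mulr_sumr raddf_sum big1 // => j _.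
  rewrite formZr.
  move: (hre j k); case: (form 1%:M (ch k) (ch j)) => f1 f2 /= ->.
  by simpc.
have u0 : u = 0.
  apply: form_null1.
  have hu : u = - ('i *: w) by apply/eqP; rewrite -addr_eq0 huw.
  have [E ge] := psd_real u (@psd1 R d).
  rewrite E; congr (_%:C).
  rewrite {2}hu formNr formZr.
  move: (rr x y); rewrite -/u -/w; case: (form 1%:M u w) => f1 f2 /= ->.
  by simpc.
have w0 : w = 0.
  move: huw; rewrite u0 add0r => /eqP; rewrite scaler_eq0 => /orP[|/eqP //].
  by rewrite eq_complex /= oner_eq0 andbF.
have x0 := hind x u0; have y0 := hind y w0.
apply/rowP => k; rewrite mxE -(splitK k); case: (fintype.split k) => [k0|k1] /=.
  by rewrite ord1 -/al al0.
by rewrite -/(be k1) [be k1]complexE -/(x k1) -/(y k1) x0 y0 mulr0 addr0.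
Qed.

Lemma lin_deriv (R : realType) p (f g : 'rV[R]_p -> R) (c e : R) x v :
  derivable f x v -> derivable g x v ->
  derivable (fun s => f s * c - g s * e) x v /\
  'D_v (fun s => f s * c - g s * e) x = 'D_v f x * c - 'D_v g x * e.
Proof.
move=> df dg.
have E : (fun s => f s * c - g s * e) = (c \*: f) - (e \*: g).
  apply/funext => s /=; change (f s * c - g s * e = c *: f s - e *: g s); by rewrite [c *: _]mulrC [e *: _]mulrC.
rewrite E; split; first by apply: derivableB; apply: derivableZ.
rewrite deriveB; try by apply: derivableZ.
by rewrite !deriveZ // [c *: _]mulrC [e *: _]mulrC.
Qed.

Lemma sum_deriv (R : realType) p n (h : 'I_n -> 'rV[R]_p -> R) x v :
  (forall i, derivable (h i) x v) ->
  derivable (fun s => \sum_(i < n) h i s) x v /\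
  'D_v (fun s => \sum_(i < n) h i s) x = \sum_(i < n) 'D_v (h i) x.
Proof.
move=> dh; have E : (fun s => \sum_(i < n) h i s) = \sum_(i < n) h i by rewrite fct_sumE.
rewrite E; split; [exact: derivable_sum | exact: derive_sum].
Qed.

Lemma derivable_pp (R : realType) p (f g h k : 'rV[R]_p -> R) x v :
  derivable f x v -> derivable g x v -> derivable h x v -> derivable k x v ->
  derivable (fun s => f s * g s + h s * k s) x v /\ derivable (fun s => f s * g s - h s * k s) x v.
Proof.
move=> df dg dh dk; split.
  by have := derivableD (derivableM df dg) (derivableM dh dk).
by have := derivableB (derivableM df dg) (derivableM dh dk).
Qed.

Lemma proj_entry (R : realType) p d (psi : 'rV[R]_p -> 'cV[R[i]]_d) s a b :
  proj_state psi s a b = psi s a 0 * (psi s b 0)^*.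
Proof. by rewrite /proj_state mxE big_ord1 !mxE. Qed.

Lemma re_tr (R : realType) d (X M : 'M[R[i]]_d) :
  Re (\tr (X *m M)) = \sum_(a < d) \sum_(b < d) (Re (X a b) * Re (M b a) - Im (X a b) * Im (M b a)).
Proof.
rewrite /mxtrace raddf_sum; apply: eq_bigr => a _; rewrite mxE raddf_sum.
by apply: eq_bigr => b _; case: (X a b) => x1 x2; case: (M b a) => y1 y2.
Qed.

Lemma deriv_tr (R : realType) p d (psi : 'rV[R]_p -> 'cV[R[i]]_d) t (j : 'I_p) (M : 'M[R[i]]_d) :
  cdifferentiable_at psi t ->
  'D_(@edir R p j) (fun s => Re (\tr (proj_state psi s *m M))) t =
  Re (\tr (mpartial (proj_state psi) j t *m M)).
Proof.
move=> hd.
have dab : forall a b, derivable (fun s => Re (proj_state psi s a b)) t (@edir R p j) /\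
                       derivable (fun s => Im (proj_state psi s a b)) t (@edir R p j).
  move=> a b.
  have [da1 da2] := hd a; have [db1 db2] := hd b.
  have [h1 h2] := derivable_pp (@diff_derivable _ _ _ _ _ (@edir R p j) da1) (@diff_derivable _ _ _ _ _ (@edir R p j) db1)
                   (@diff_derivable _ _ _ _ _ (@edir R p j) da2) (@diff_derivable _ _ _ _ _ (@edir R p j) db2).
  have [h3 h4] := derivable_pp (@diff_derivable _ _ _ _ _ (@edir R p j) da2) (@diff_derivable _ _ _ _ _ (@edir R p j) db1)
                   (@diff_derivable _ _ _ _ _ (@edir R p j) da1) (@diff_derivable _ _ _ _ _ (@edir R p j) db2).
  split.
    have -> : (fun s => Re (proj_state psi s a b)) = (fun s => Re (psi s a 0) * Re (psi s b 0) + Im (psi s a 0) * Im (psi s b 0)).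
      by apply/funext => s; rewrite proj_entry; case: (psi s a 0) => x1 x2; case: (psi s b 0) => y1 y2 /=; ring.
    exact: h1.
  have -> : (fun s => Im (proj_state psi s a b)) = (fun s => Im (psi s a 0) * Re (psi s b 0) - Re (psi s a 0) * Im (psi s b 0)).
    by apply/funext => s; rewrite proj_entry; case: (psi s a 0) => x1 x2; case: (psi s b 0) => y1 y2 /=; ring.
  exact: h4.
have -> : (fun s => Re (\tr (proj_state psi s *m M))) = (fun s => \sum_(a < d) \sum_(b < d)
   (Re (proj_state psi s a b) * Re (M b a) - Im (proj_state psi s a b) * Im (M b a))).
  by apply/funext => s; rewrite re_tr.
have dl : forall a b, derivable (fun s => Re (proj_state psi s a b) * Re (M b a) - Im (proj_state psi s a b) * Im (M b a)) t (@edir R p j) /\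
   'D_(@edir R p j) (fun s => Re (proj_state psi s a b) * Re (M b a) - Im (proj_state psi s a b) * Im (M b a)) t =
   'D_(@edir R p j) (fun s => Re (proj_state psi s a b)) t * Re (M b a) - 'D_(@edir R p j) (fun s => Im (proj_state psi s a b)) t * Im (M b a).
  by move=> a b; have [h1 h2] := dab a b; exact: lin_deriv.
have di : forall a, derivable (fun s => \sum_(b < d) (Re (proj_state psi s a b) * Re (M b a) - Im (proj_state psi s a b) * Im (M b a))) t (@edir R p j) /\
   'D_(@edir R p j) (fun s => \sum_(b < d) (Re (proj_state psi s a b) * Re (M b a) - Im (proj_state psi s a b) * Im (M b a))) t =
   \sum_(b < d) ('D_(@edir R p j) (fun s => Re (proj_state psi s a b)) t * Re (M b a) - 'D_(@edir R p j) (fun s => Im (proj_state psi s a b)) t * Im (M b a)).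
  move=> a.
  have [h1 h2] := @sum_deriv R p d (fun (b : 'I_d) (s : 'rV[R]_p) => Re (proj_state psi s a b) * Re (M b a) - Im (proj_state psi s a b) * Im (M b a)) t (@edir R p j) (fun b => (dl a b).1).
  split; first exact: h1.
  by rewrite h2; apply: eq_bigr => b _; rewrite (dl a b).2.
have [h1 h2] := @sum_deriv R p d (fun (a : 'I_d) (s : 'rV[R]_p) => \sum_(b < d) (Re (proj_state psi s a b) * Re (M b a) - Im (proj_state psi s a b) * Im (M b a))) t (@edir R p j) (fun a => (di a).1).
rewrite h2 re_tr; apply: eq_bigr => a _; rewrite (di a).2; apply: eq_bigr => b _.
by rewrite /mpartial !mxE /=; simpc.
Qed.


Lemma tr11 (R : realType) (A : 'M[R[i]]_1) : \tr A = A 0 0.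
Proof. by rewrite /mxtrace big_ord1. Qed.

Lemma im_prod (R : realType) (x y z : R[i]) : Im x = 0 -> Im y = 0 -> Im z = 0 -> Im (x / z * y^*) = 0.
Proof.
case: x => x1 x2; case: y => y1 y2; case: z => z1 z2 /= -> -> ->.
by simpc; rewrite /=; ring.
Qed.

Lemma tr_sld (R : realType) d (ps : 'cV[R[i]]_d) (L X : 'M[R[i]]_d) :
  \tr ((2^-1 *: (ps *m adj ps *m L + L *m (ps *m adj ps))) *m X) =
  2^-1 * (form (L *m X) ps ps + form (X *m L) ps ps).
Proof.
rewrite -scalemxAl mxtraceZ mulmxDl mxtraceD; congr (_ * (_ + _)).
  by rewrite -!mulmxA mxtrace_mulC tr11 /form !mulmxA.
by rewrite !mulmxA -[L *m ps *m adj ps *m X]mulmxA mxtrace_mulC tr11 /form !mulmxA.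
Qed.

Unset Implicit Arguments.
Theorem theorem4p3 (R : realType) (p d : nat)
  (Theta : set 'rV[R]_p) (psi : 'rV[R]_p -> 'cV[R[i]]_d) :
  open Theta ->
  (forall t, Theta t -> (adj (psi t) *m psi t) 0 0 = 1) ->
  (forall t, Theta t -> cdifferentiable_at psi t) ->
  (forall t, Theta t ->
     R_lin_indep (fun j => mpartial (proj_state psi) j t)) ->
  forall (t : 'rV[R]_p), Theta t ->
  forall L : 'I_p -> 'M[R[i]]_d,
    (forall j, is_SLD (proj_state psi) t j (L j)) ->
    (exists (n : nat) (M : 'I_n -> 'M[R[i]]_d),
        POVM M /\
        fisher_info (proj_state psi) M t = SLD_info (proj_state psi t) L) ->
    (p <= d - 1)%N.
Proof.
move=> hopen hnorm hdiff hnd t ht L hSLD [n [M [[hpsd hsum] hF]]].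
set ps := psi t.
have hrho : proj_state psi t = ps *m adj ps by [].
pose ch j := L j *m ps.
have hL : forall j, adj (L j) = L j by move=> j; case: (hSLD j).
have hD : forall j, mpartial (proj_state psi) j t = 2^-1 *: (ps *m adj ps *m L j + L j *m (ps *m adj ps)).
  by move=> j; case: (hSLD j) => _ ->.
have adjch : forall j, adj (ch j) = adj ps *m L j by move=> j; rewrite /ch adjM hL.
have F1 : form 1%:M ps ps = 1 by rewrite /form mulmx1; exact: hnorm.
have F2 : forall j, Re (\tr (mpartial (proj_state psi) j t *m 1%:M)) = 0.
  move=> j; rewrite -deriv_tr; last exact: hdiff.
  have hnb : nbhs t Theta by apply: open_nbhs_nbhs; split.
  rewrite (@near_eq_derive R _ _ _ (fun _ : 'rV[R]_p => (1 : R))); first exact: derive_cst.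
  apply: filterS hnb => s hs /=.
  by rewrite mulmx1 /proj_state mxtrace_mulC tr11 hnorm.
have F3 : forall j, form 1%:M ps (ch j) = 0.
  move=> j; have := F2 j; rewrite hD tr_sld mulmx1 mul1mx.
  have -> : form 1%:M ps (ch j) = form (L j) ps ps by rewrite /form mulmx1 mulmxA.
  have hr : (form (L j) ps ps)^* = form (L j) ps ps by rewrite form_conj hL.
  move: hr; case: (form (L j) ps ps) => f1 f2 /= [] h2; simpc; rewrite /= => h1.
  have e2 : f2 = 0 by lra.
  have k : (1 + 1) / ((1 + 1) ^+ 2 + 0 ^+ 2) = (2 : R)^-1 by rewrite expr0n addr0; field.
  move: h1; rewrite k => h1; have e1 : f1 = 0 by lra.
  by rewrite e1 e2.
have F4 : forall c : 'I_p -> R, \sum_(j < p) (c j)%:C *: ch j = 0 -> forall j, c j = 0.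
  move=> c hc; apply: (hnd t ht c).
  rewrite (_ : \sum_(j < p) (c j)%:C *: mpartial (proj_state psi) j t = 2^-1 *: (ps *m adj (\sum_(j < p) (c j)%:C *: ch j) + (\sum_(j < p) (c j)%:C *: ch j) *m adj ps)).
    by rewrite hc adj0 mulmx0 mul0mx addr0 scaler0.
  rewrite adj_sum mulmx_sumr mulmx_suml -big_split scaler_sumr; apply: eq_bigr => j _ /=.
  have cr : forall x : R, ((x%:C)^* : R[i]) = x%:C by move=> x; apply/eqP; rewrite eq_complex /= oppr0 !eqxx.
  rewrite hD adjZ [X in X *: adj (ch j)](_ : _ = (c j)%:C); last by apply/eqP; rewrite eq_complex /= oppr0 !eqxx.
  rewrite adjch -scalemxAl -scalemxAr scalerA mulrC -scalerA -scalerDr.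
  by rewrite /ch !mulmxA.
have F5 : forall j m, 'D_(@edir R p j) (outcome_prob (proj_state psi) M m) t = Re (form (M m) ps (ch j)).
  move=> j m; rewrite /outcome_prob deriv_tr; last exact: hdiff.
  rewrite hD tr_sld.
  have -> : form (L j *m M m) ps ps = (form (M m) ps (ch j))^*.
    by rewrite -(psd_sym (hpsd m)) /form adjch !mulmxA.
  have -> : form (M m *m L j) ps ps = form (M m) ps (ch j) by rewrite /form /ch !mulmxA.
  by case: (form (M m) ps (ch j)) => z1 z2; simpc; rewrite /= expr0n addr0; field.
have F6 : forall m, outcome_prob (proj_state psi) M m t = Re (form (M m) ps ps).
  by move=> m; rewrite /outcome_prob /proj_state -/ps -mulmxA mxtrace_mulC tr11.
have F7 : forall j, (SLD_info (proj_state psi t) L) j j = \sum_(m < n) Re (form (M m) (ch j) (ch j)).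
  move=> j; rewrite mxE -raddf_sum -form_sumA hsum /= /proj_state -/ps.
  by rewrite !mulmxA -mulmxA mxtrace_mulC tr11 /form adjch mulmx1.
have F8 : forall j k, form 1%:M (ch k) (ch j) = \sum_(m < n) form (M m) (ch k) (ch j).
  by move=> j k; rewrite -form_sumA hsum.
pose P m := Re (form (M m) ps ps).
pose a m j := Re (form (M m) ps (ch j)).
pose Q m j := Re (form (M m) (ch j) (ch j)).
pose g m j := if 0 < P m then (P m)^-1 * a m j * a m j else 0.
have gle : forall m j, g m j <= Q m j.
  move=> m j; rewrite /g; case: ifP => hp.
    exact: (term_main (ch j) (hpsd m) hp).1.
  exact: (psd_real (ch j) (hpsd m)).2.
have geq : forall j m, g m j = Q m j.
  move=> j m.
  have hs : \sum_(m < n) g m j = \sum_(m < n) Q m j.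
    have := congr1 (fun A : 'M[R]_p => A j j) hF; rewrite F7 /= mxE.
    rewrite big_mkcond /=; move=> <-; apply: eq_bigr => m' _.
    by rewrite /g F6 !F5.
  have : \sum_(m < n) (Q m j - g m j) = 0 by rewrite sumrB hs subrr.
  move/eqP; rewrite psumr_eq0 => [/allP /(_ m (mem_index_enum m)) /= /eqP h|m' _].
    by apply/eqP; rewrite eq_sym -subr_eq0 h.
  by rewrite subr_ge0 gle.
have key : forall m j k, Im (form (M m) (ch k) (ch j)) = 0.
  move=> m j k; have := geq j m; have := geq k m; rewrite /g /Q.
  case: ifP => hp.
    move=> /(term_main (ch k) (hpsd m) hp).2 [imk _] /(term_main (ch j) (hpsd m) hp).2 [imj hu].
    rewrite hu (psd_sym (hpsd m) (ch k) ps); apply: im_prod => //.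
    by rewrite (psd_real ps (hpsd m)).1.
  move=> _ hq.
  have hz : form (M m) (ch j) (ch j) = 0 by rewrite (psd_real (ch j) (hpsd m)).1 -hq.
  by rewrite (psd_null (hpsd m) hz).
have hre : forall j k, Im (form 1%:M (ch k) (ch j)) = 0.
  by move=> j k; rewrite F8 raddf_sum big1 // => m _; exact: key.
have hb := lin_indep_bound F1 F3 hre F4.
have nat_aux : forall x y : nat, (x.+1 <= y)%N -> (x <= y - 1)%N.
  by move=> x y; case: y => //= y; rewrite subn1.
exact: nat_aux hb.
Qed.
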